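(* Let $Q=(I,E)$ be a symmetric quiver with an even number of edges between any two different vertices and an odd number of loops at every vertex, and let $(d,v)\in\mathbb{N}^I\times\mathbb{Z}$. Then $S^d_v$ consists of the partitions $(d_i)_{i=1}^k$ of $d$ such that $v\cdot\underline{d_i}/\underline{d}\in\mathbb{Z}$ for all $1\le i\le k$. In particular, if $\gcd(v,\underline d)=1$ then $S^d_v$ contains only the one-term partition of $d$.
   Context: For $e=(e^i)\in\mathbb{N}^I$, $\underline e=\sum_ie^i$. $R(d)=\bigoplus_{(i\to j)\in E}\mathrm{Hom}(V^i,V^j)$, $\dim V^i=d^i$, $G(d)=\prod GL(V^i)$, Lie algebra $\mathfrak{g}(d)$, diagonal torus $T(d)$ with weights $\beta^i_a$, $\tau_d=\frac1{\underline d}\sum_{i,a}\beta^i_a$. For a cocharacter $\lambda$ of $T(d)$, $n_\lambda=\langle\lambda,\det(R(d)^\vee)^{\lambda>0}\rangle-\langle\lambda,\det(\mathfrak{g}(d)^\vee)^{\lambda>0}\rangle$, where $V^{\lambda>0}$ is the span of weights pairing positively with $\lambda$. A partition of $d$ is a collection of nonzero $d_1,\dots,d_k\in\mathbb{N}^I$ with sum $d$; a cocharacter $\lambda$ has associated partition $(d_j)$ if the $j$-th distinct value of $\langle\lambda,\beta^i_a\rangle$ occurs $d^i_j$ times for each $i$. $S^d_v$ is the set of partitions of $d$ such that $n_\lambda/2+\langle\lambda,v\tau_d\rangle\in\mathbb{Z}$ for every cocharacter $\lambda$ with that associated partition. *)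

(* Defs.v *)
From HB Require Import structures.
From mathcomp Require Import all_boot all_order all_algebra.
Set Implicit Arguments. Unset Strict Implicit. Unset Printing Implicit Defensive.
Import Order.TTheory GRing.Theory Num.Theory.
Local Open Scope ring_scope.

Section Quiver.
Variables (I E : finType) (src tgt : E -> I).

Definition nedges (i j : I) : nat := #|[set e : E | (src e == i) && (tgt e == j)]|.

Definition symmetric_quiver : Prop := forall i j : I, nedges i j = nedges j i.

(* underline e = sum_i e^i *)
Definition dsum (e : {ffun I -> nat}) : nat := (\sum_(i : I) e i)%N.

Section Dim.
Variable d : {ffun I -> nat}.

(* index set of the diagonal torus T(d): pairs (i, a), a < d^i *)
Definition idx := {i : I & 'I_(d i)}.

(* characters and cocharacters of T(d), both identified with Z^idx *)
Definition character := idx -> int.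
Definition cocharacter := idx -> int.

Definition pairing (lam : cocharacter) (chi : character) : int :=
  \sum_(x : idx) lam x * chi x.

Definition beta (x : idx) : character := fun y => (x == y)%:R.

Definition wdiff (x y : idx) : character := fun z => beta x z - beta y z.

(* weights (with multiplicity) of R(d)^vee: Hom(V^i,V^j) has weights
   beta^j_b - beta^i_a, so the dual has weights beta^i_a - beta^j_b *)
Definition Rdual_weights : seq character :=
  flatten [seq flatten [seq [seq wdiff (Tagged (fun i => 'I_(d i)) a)
                                        (Tagged (fun i => 'I_(d i)) b)
                             | b <- enum 'I_(d (tgt e))]
                        | a <- enum 'I_(d (src e))]
          | e <- enum E].

(* weights (with multiplicity) of g(d)^vee *)
Definition gdual_weights : seq character :=
  flatten [seq flatten [seq [seq wdiff (Tagged (fun i => 'I_(d i)) a)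
                                        (Tagged (fun i => 'I_(d i)) b)
                             | b <- enum 'I_(d i)]
                        | a <- enum 'I_(d i)]
          | i <- enum I].

(* <lambda, det (V^{lambda>0})> for V with weight multiset ws *)
Definition det_pos_pairing (lam : cocharacter) (ws : seq character) : int :=
  \sum_(w <- ws | 0 < pairing lam w) pairing lam w.

Definition n_lambda (lam : cocharacter) : int :=
  det_pos_pairing lam Rdual_weights - det_pos_pairing lam gdual_weights.

(* <lambda, v tau_d>, tau_d = (1/underline d) sum_{i,a} beta^i_a *)
Definition pairing_vtau (v : int) (lam : cocharacter) : rat :=
  \sum_(x : idx) (lam x)%:~R * (v%:~R / (dsum d)%:R).

Definition is_partition (s : seq {ffun I -> nat}) : Prop :=
  (forall p, p \in s -> exists i, (0 < p i)%N) /\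
  (forall i : I, (\sum_(p <- s) p i)%N = d i).

Definition distinct_values (lam : cocharacter) : seq int :=
  sort (fun a b : int => a <= b) (undup [seq lam x | x <- enum {: idx}]).

Definition assoc_partition (lam : cocharacter) (s : seq {ffun I -> nat}) : Prop :=
  size (distinct_values lam) = size s /\
  forall (j : nat) (i : I), (j < size s)%N ->
    #|[set a : 'I_(d i) | lam (Tagged (fun i => 'I_(d i)) a)
                          == nth 0 (distinct_values lam) j]|
    = nth [ffun=> 0%N] s j i.

Definition in_S (v : int) (s : seq {ffun I -> nat}) : Prop :=
  is_partition s /\
  forall lam : cocharacter, assoc_partition lam s ->
    ((n_lambda lam)%:~R / 2 + pairing_vtau v lam : rat) \is a Num.int.
End Dim.
End Quiver.

(* Main.v *)
Require Import Defs.
From HB Require Import structures.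
From mathcomp Require Import all_boot all_order all_algebra.
Set Implicit Arguments. Unset Strict Implicit. Unset Printing Implicit Defensive.
Import Order.TTheory GRing.Theory Num.Theory.
Local Open Scope ring_scope.

From mathcomp Require Import zify ring.
Section A.
Variables (I E : finType) (src tgt : E -> I) (d : {ffun I -> nat}).
Variable lam : cocharacter d.

Definition tgA (i : I) (a : 'I_(d i)) : idx d := Tagged (fun i => 'I_(d i)) a.

Lemma pairing_wdiff (x y : idx d) : pairing lam (wdiff x y) = lam x - lam y.
Proof.
rewrite /pairing /wdiff /beta.
under eq_bigr do rewrite mulrBr.
rewrite sumrB.
have H z : \sum_(x0 : idx d) lam x0 * (z == x0)%:R = lam z.
  rewrite (bigD1 z) //= eqxx mulr1 big1 ?addr0 // => w /negbTE.
  by rewrite eq_sym => ->; rewrite mulr0.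
by rewrite !H.
Qed.

Definition pos (t : int) : int := if 0 < t then t else 0.

Definition G (i j : I) : int :=
  \sum_(a : 'I_(d i)) \sum_(b : 'I_(d j)) pos (lam (tgA a) - lam (tgA b)).

Lemma L1 (i j : I) :
  \sum_(w <- flatten [seq [seq wdiff (tgA a) (tgA b) | b <- enum 'I_(d j)]
                        | a <- enum 'I_(d i)]) pos (pairing lam w) = G i j.
Proof.
rewrite big_flatten big_map /G big_enum /=; apply: eq_bigr => a _.
rewrite big_map big_enum /=; apply: eq_bigr => b _.
by rewrite pairing_wdiff.
Qed.

Lemma detE ws : det_pos_pairing lam ws = \sum_(w <- ws) pos (pairing lam w).
Proof. by rewrite /det_pos_pairing big_mkcond. Qed.

Lemma Rpart : det_pos_pairing lam (Rdual_weights src tgt d) =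
  \sum_(p : I * I) G p.1 p.2 *+ nedges src tgt p.1 p.2.
Proof.
rewrite detE /Rdual_weights big_flatten big_map big_enum /=.
under eq_bigr do rewrite L1.
rewrite (partition_big (fun e => (src e, tgt e)) xpredT) //=.
apply: eq_bigr => p _.
rewrite (eq_bigr (fun _ => G p.1 p.2)); last by move=> e /eqP <-.
rewrite sumr_const /nedges; congr (_ *+ _).
by apply: eq_card => e; rewrite !inE; case: p => a b.
Qed.

Lemma gpart : det_pos_pairing lam (gdual_weights d) =
  \sum_(p : I * I) G p.1 p.2 *+ (p.1 == p.2).
Proof.
rewrite detE /gdual_weights big_flatten big_map big_enum /=.
under eq_bigr do rewrite L1.
rewrite -(pair_bigA _ (fun i j => G i j *+ (i == j))) /=.
apply: eq_bigr => i _.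
rewrite (bigD1 i) //= eqxx mulr1n big1 ?addr0 // => j.
by rewrite eq_sym => /negbTE ->; rewrite mulr0n.
Qed.


Lemma nlam_even
  (Heven : forall i j : I, i != j -> ~~ odd (nedges src tgt i j))
  (Hloops : forall i : I, odd (nedges src tgt i i)) :
  ((n_lambda src tgt lam)%:~R / 2 : rat) \is a Num.int.
Proof.
have Hn : n_lambda src tgt lam =
   (\sum_(p : I * I) G p.1 p.2 *+ (nedges src tgt p.1 p.2)./2) *+ 2.
  rewrite /n_lambda Rpart gpart -sumrB -sumrMnl; apply: eq_bigr => p _.
  have Ho : odd (nedges src tgt p.1 p.2) = (p.1 == p.2).
    case: eqP => [->|/eqP ne]; first exact: Hloops.
    by apply/negbTE/Heven.
  rewrite -{1}(odd_double_half (nedges src tgt p.1 p.2)) Ho mulrnDr addrC addKr.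
  by rewrite -mul2n mulnC mulrnA.
rewrite Hn rmorphMn -mulr_natr mulfK ?intr_int // pnatr_eq0.
Qed.
End A.
Lemma card_nth (T : Type) (x0 : T) (L : seq T) (P : pred T) (n : nat) :
  size L = n -> #|[set a : 'I_n | P (nth x0 L a)]| = count P L.
Proof.
move=> <-.
rewrite -sum1_card big_mkcond /=.
have -> : count P L = (\sum_(x <- L) P x)%N.
  by elim: L {x0} => [|y L IH]; rewrite ?big_nil ?big_cons //= IH.
rewrite (big_nth x0) big_mkord; apply: eq_bigr => a _.
by rewrite inE; case: (P _).
Qed.

Lemma sum_ind_seq (c : seq int) (z : int) :
  uniq c -> z \in c -> \sum_(y <- c) (z == y)%:R * y = z.
Proof.
move=> uc zc; rewrite (bigD1_seq z) //= eqxx mul1r big1 ?addr0 // => y.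
by rewrite eq_sym => /negbTE ->; rewrite mul0r.
Qed.

Lemma sum_card_ind (n : nat) (Q : pred 'I_n) :
  \sum_(a : 'I_n) (Q a)%:R = (#|[set a | Q a]|%:R : int).
Proof.
rewrite -sum1_card natr_sum [RHS]big_mkcond /=; apply: eq_bigr => a _.
by rewrite inE; case: (Q a).
Qed.

Section B.
Variables (I : finType) (d : {ffun I -> nat}).

Definition tg (i : I) (a : 'I_(d i)) : idx d := Tagged (fun i => 'I_(d i)) a.

Lemma sum_idx (R : nmodType) (F : idx d -> R) :
  \sum_(x : idx d) F x = \sum_(i : I) \sum_(a : 'I_(d i)) F (tg a).
Proof.
rewrite [RHS](sig_big_dep xpredT (fun _ _ => true) (fun i a => F (tg a))) /=.
by apply: eq_bigr => -[i a].
Qed.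

Lemma sum_lam (lam : cocharacter d) (s : seq {ffun I -> nat}) :
  assoc_partition lam s ->
  \sum_(x : idx d) lam x =
  \sum_(j < size s) (dsum (nth [ffun=> 0%N] s j))%:R * nth 0 (distinct_values lam) j.
Proof.
case=> Hsz Hc.
set c := distinct_values lam.
have uc : uniq c by rewrite sort_uniq undup_uniq.
have mc x : lam x \in c.
  by rewrite mem_sort mem_undup; apply: map_f; rewrite mem_enum.
rewrite (eq_bigr (fun x => \sum_(y <- c) (lam x == y)%:R * y)); last first.
  by move=> x _; rewrite sum_ind_seq.
rewrite exchange_big /=.
rewrite (big_nth 0) big_mkord -Hsz; apply: eq_bigr => j _.
rewrite -mulr_suml sum_idx; congr (_ * _).
rewrite /dsum natr_sum; apply: eq_bigr => i _.
by rewrite sum_card_ind Hc // -Hsz.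
Qed.

End B.

Section C.
Variables (I : finType) (d : {ffun I -> nat}) (s : seq {ffun I -> nat}).
Hypothesis Hpart : is_partition d s.

Let k := size s.
Definition nthp j := nth [ffun=> 0%N] s j.
Definition L (i : I) := flatten [seq nseq (nthp j i) j | j <- iota 0 k].

Lemma size_L i : size (L i) = d i.
Proof.
rewrite size_flatten /shape -map_comp.
rewrite (eq_map (g := fun j => nthp j i)); last by move=> j /=; rewrite size_nseq.
have -> : [seq nthp j i | j <- iota 0 k] = [seq p i | p : {ffun I -> nat} <- s].
  by rewrite -{1}(mkseq_nth ([ffun=> 0%N] : {ffun I -> nat}) s) /mkseq -map_comp.
by rewrite sumnE big_map; case: Hpart => _ ->.
Qed.

Lemma count_L i j : count (pred1 j) (L i) = if (j < k)%N then nthp j i else 0%N.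
Proof.
rewrite count_flatten -map_comp.
rewrite (eq_map (g := fun j' => ((j' == j) * nthp j' i)%N)); last first.
  by move=> j' /=; rewrite count_nseq.
rewrite sumnE big_map -{1}(subn0 k) -/(index_iota 0 k) big_mkord.
case: ifP => hj.
  rewrite (bigD1 (Ordinal hj)) //= eqxx mul1n big1 ?addn0 // => j' /negbTE.
  by rewrite -val_eqE /= => ->.
rewrite big1 // => j' _.
have : (j' < j)%N by apply: leq_trans (ltn_ord j') _; rewrite leqNgt hj.
by rewrite ltn_neqAle => /andP [/negbTE -> _].
Qed.

Definition f (i : I) (a : 'I_(d i)) : nat := nth 0%N (L i) a.

Lemma card_f i j : #|[set a : 'I_(d i) | f a == j]| = if (j < k)%N then nthp j i else 0%N.
Proof. by rewrite -count_L -(card_nth 0%N (pred1 j) (size_L i)). Qed.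

Lemma f_lt i (a : 'I_(d i)) : (f a < k)%N.
Proof.
have : f a \in L i by rewrite /f mem_nth // size_L.
case/flattenP => l /mapP [j]; rewrite mem_iota add0n => /andP [_ hj] ->.
by rewrite mem_nseq => /andP [_ /eqP ->].
Qed.

Definition lamc (c : nat -> int) : cocharacter d := fun x => c (f (tagged x)).


Lemma dv_lamc c (Hc : {homo c : a b / (a < b)%N >-> a < b}) :
  distinct_values (lamc c) = map c (iota 0 k).
Proof.
have cinj : injective c.
  move=> a b eab; apply/eqP; case: (ltngtP a b) => // h; have := Hc _ _ h;
  by rewrite eab ltxx.
apply: (sorted_eq (leT := fun a b : int => a <= b)).
- exact: le_trans.
- exact: le_anti.
- exact: (sort_sorted le_total).
- rewrite sorted_map; apply: sub_sorted (iota_ltn_sorted 0 k) => a b /Hc /ltW.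
  by [].
rewrite perm_sort; apply: uniq_perm.
- exact: undup_uniq.
- by rewrite (map_inj_uniq cinj) iota_uniq.
move=> y; rewrite mem_undup; apply/mapP/mapP.
  case=> x _ ->; exists (f (tagged x)) => //.
  by rewrite mem_iota add0n f_lt.
case=> j; rewrite mem_iota add0n => /andP [_ hj] ->.
case: Hpart => Hnz _; case: (Hnz (nthp j) (mem_nth _ hj)) => i hi.
have jL : j \in L i by rewrite -has_pred1 has_count count_L hj.
have ha : (index j (L i) < d i)%N by rewrite -size_L index_mem.
exists (Tagged (fun i => 'I_(d i)) (Ordinal ha)); first by rewrite mem_enum.
by rewrite /lamc /= /f nth_index.
Qed.

Lemma assoc_lamc c (Hc : {homo c : a b / (a < b)%N >-> a < b}) :
  assoc_partition (lamc c) s.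
Proof.
have cinj : injective c.
  move=> a b eab; apply/eqP; case: (ltngtP a b) => // h; have := Hc _ _ h;
  by rewrite eab ltxx.
split; first by rewrite dv_lamc // size_map size_iota.
move=> j i hj; rewrite dv_lamc // (nth_map 0%N) ?size_iota // nth_iota // add0n.
have -> : [set a : 'I_(d i) | lamc c (Tagged (fun i => 'I_(d i)) a) == c j]
        = [set a | f a == j].
  by apply/setP => a; rewrite !inE /lamc /= (inj_eq cinj).
by rewrite card_f hj.
Qed.

End C.

Lemma vtauE (I : finType) (d : {ffun I -> nat}) (v : int) (lam : cocharacter d) :
  pairing_vtau v lam = (\sum_x lam x)%:~R * (v%:~R / (dsum d)%:R).
Proof. by rewrite /pairing_vtau -mulr_suml; congr (_ * _); rewrite rmorph_sum. Qed.

Lemma exists_pos (I : finType) (p : {ffun I -> nat}) :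
  (0 < dsum p)%N -> exists i, (0 < p i)%N.
Proof.
move=> Hd; case: (boolP [exists i, (0 < p i)%N]) => [/existsP //|].
rewrite negb_exists => /forallP H; move: Hd; rewrite /dsum big1 // => i _.
by move: (H i); rewrite lt0n negbK => /eqP.
Qed.

Lemma dsum_pos (I : finType) (p : {ffun I -> nat}) i :
  (0 < p i)%N -> (0 < dsum p)%N.
Proof.
move=> hi; apply: leq_trans hi _; rewrite /dsum (bigD1 i) //=; exact: leq_addr.
Qed.

Lemma part1 (I E : finType) (src tgt : E -> I)
  (Heven : forall i j : I, i != j -> ~~ odd (nedges src tgt i j))
  (Hloops : forall i : I, odd (nedges src tgt i i))
  (d : {ffun I -> nat}) (v : int) (s : seq {ffun I -> nat}) :
     in_S src tgt d v s <->
     (is_partition d s /\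
      forall p, p \in s ->
        ((v%:~R * (dsum p)%:R / (dsum d)%:R : rat) \is a Num.int)).
Proof.
split.
  case=> Hp HS; split => // p ps.
  have Hvt (lam : cocharacter d) : assoc_partition lam s -> pairing_vtau v lam \is a Num.int.
    by move=> Hl; rewrite -(rpredDl _ (nlam_even lam Heven Hloops)); apply: HS.
  set m := index p s.
  have hm : (m < size s)%N by rewrite index_mem.
  have Hp1 : p = nthp s m by rewrite /nthp nth_index.
  pose c1 j := ((j + (m <= j)%N)%N)%:Z.
  pose c2 j := ((j + (m.+1 <= j)%N)%N)%:Z.
  have Hc1 : {homo c1 : a b / (a < b)%N >-> a < b}.
    move=> a b hab; rewrite /c1 ltz_nat.
    case: (leqP m a); case: (leqP m b) => /= h1 h2; lia.
  have Hc2 : {homo c2 : a b / (a < b)%N >-> a < b}.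
    move=> a b hab; rewrite /c2 ltz_nat.
    case: (leqP m.+1 a); case: (leqP m.+1 b) => /= h1 h2; lia.
  have := rpredB (Hvt _ (assoc_lamc Hp Hc1)) (Hvt _ (assoc_lamc Hp Hc2)).
  rewrite !vtauE -mulrBl -rmorphB -sumrB.
  rewrite (eq_bigr (fun x => ((f s (tagged x) == m)%:R : int))); last first.
    move=> x _; rewrite /lamc /c1 /c2.
    case: (ltngtP (f s (tagged x)) m) => h; rewrite ?subrr //=.
    by rewrite addn0 PoszD addrAC subrr add0r.
  rewrite sum_idx.
  rewrite (eq_bigr (fun i => ((p i)%:R : int))); last first.
    move=> i _; rewrite sum_card_ind (card_f Hp); case: ifP => [_|]; [by rewrite Hp1 | by rewrite hm].
  rewrite -natr_sum -/(dsum p) => H.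
  by move: H; rewrite rmorph_nat mulrCA mulrA.
case=> Hp Hint; split => // lam Hl.
rewrite rpredD ?nlam_even // vtauE (sum_lam Hl) rmorph_sum mulr_suml.
apply: rpred_sum => j _.
rewrite rmorphM /= rmorph_nat.
have -> : forall a b c e : rat, a * b * (c / e) = b * (c * a / e).
  by move=> a b c' e; ring.
apply: rpredM; first exact: intr_int.
exact: (Hint _ (mem_nth _ (ltn_ord j))).
Qed.

Lemma sum_dsum (I : finType) (d : {ffun I -> nat}) (s : seq {ffun I -> nat}) :
  is_partition d s -> (\sum_(p <- s) dsum p)%N = dsum d.
Proof.
case=> _ Hs; rewrite /dsum exchange_big /=; apply: eq_bigr => i _; exact: Hs.
Qed.

Unset Implicit Arguments.
Set Strict Implicit.

Theorem proposition8p5 (I E : finType) (src tgt : E -> I)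
  (Hsym : symmetric_quiver src tgt)
  (Heven : forall i j : I, i != j -> ~~ odd (nedges src tgt i j))
  (Hloops : forall i : I, odd (nedges src tgt i i))
  (d : {ffun I -> nat}) (v : int)
  (Hd : (0 < dsum d)%N) :
  (forall s : seq {ffun I -> nat},
     in_S src tgt d v s <->
     (is_partition d s /\
      forall p, p \in s ->
        ((v%:~R * (dsum p)%:R / (dsum d)%:R : rat) \is a Num.int)))
  /\
  ((gcdn `|v|%N (dsum d) = 1)%N ->
   forall s : seq {ffun I -> nat}, in_S src tgt d v s <-> s = [:: d]).
Proof.
have H1 := part1 Heven Hloops d v.
split; first exact: H1.
move=> Hg s; rewrite H1; split; last first.
  move=> ->; split.
    split; last by move=> i; rewrite big_seq1.
    by move=> p; rewrite inE => /eqP ->; exact: exists_pos.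
  move=> p; rewrite inE => /eqP ->.
  by rewrite mulfK ?intr_int // pnatr_eq0 -lt0n.
case=> Hp Hint.
have Hge p : p \in s -> (dsum d <= dsum p)%N.
  move=> ps; have [i hi] := (proj1 Hp) p ps.
  have pp := dsum_pos hi.
  apply: dvdn_leq => //.
  have /intrP [z Hz] := Hint p ps.
  have Hz' : (v * (dsum p)%:R)%R = (z * (dsum d)%:R)%R.
    apply: (@intr_inj rat); rewrite !rmorphM /= !rmorph_nat -Hz mulfVK //.
    by rewrite pnatr_eq0 -lt0n.
  have := congr1 absz Hz'; rewrite !abszM !natz /= => Habs.
  rewrite -(@Gauss_dvdr _ `|v|%N); last by rewrite coprime_sym /coprime Hg.
  by rewrite Habs dvdn_mull.
have Hsum := sum_dsum Hp.
case: s Hp Hint Hge Hsum => [|p s'] Hp Hint Hge Hsum.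
  by move: Hsum; rewrite big_nil => H0; rewrite -H0 in Hd.
have Hs' : s' = [::].
  case: s' Hp Hint Hge Hsum => [//|q s''] Hp Hint Hge Hsum.
  move: Hsum; rewrite !big_cons.
  have hq : q \in [:: p, q & s''] by rewrite inE mem_head orbT.
  have := Hge p (mem_head _ _); have := Hge q hq.
  lia.
subst s'; congr (_ :: _); apply/ffunP => i.
by case: Hp => _ /(_ i); rewrite big_seq1.
Qed.
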